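(* Let $\Gamma$ be a connected simplicial graph which is tree-graded with respect to a collection of subgraphs $\{\Gamma_i\}_{i\in I}$, and fix a basepoint $e\in V(\Gamma)$. Then for each $x\in V(\Gamma)$ there are finite sets $I_x=\{i_0,i_1,\dots,i_k\}\subseteq I$ and $\{x_0,\dots,x_k=x\}\subseteq V(\Gamma)$ such that every geodesic $g$ from $e$ to $x$ can be decomposed as a concatenation of subgeodesics \[ g=g_0\,\overline{g_0}\,g_1\,\overline{g_1}\cdots\overline{g_{k-1}}\,g_k \] such that for each $j$: (i) $g_j\subseteq\Gamma_{i_j}$, the initial vertex of $g_j$ is $e_j$, the unique vertex of $\Gamma_{i_j}$ at minimal distance from $e_0=e$, and the terminal vertex of $g_j$ is $x_j$; and (ii) $\overline{g_j}$ has length at most $1$.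
   Context: A connected simplicial graph $\Gamma$ is tree-graded with respect to a collection $\{\Gamma_i\}_{i\in I}$ of non-empty connected subgraphs if (1) every vertex and every simple loop of $\Gamma$ is contained in some $\Gamma_i$, and (2) for $i\neq j$, $\Gamma_i\not\subseteq\Gamma_j$ and $|V(\Gamma_i)\cap V(\Gamma_j)|\leq 1$. $\Gamma$ carries the shortest path metric. *)

(* Defs.v *)
From Stdlib Require Import List Arith Lia.
Import ListNotations.
Set Implicit Arguments.

Section Graphs.
Variable V : Type.

Fixpoint chain (R : V -> V -> Prop) (p : list V) : Prop :=
  match p with
  | a :: ((b :: _) as q) => R a b /\ chain R q
  | _ => True
  end.

Definition walk (R : V -> V -> Prop) (u v : V) (p : list V) : Prop :=
  p <> [] /\ hd u p = u /\ last p u = v /\ chain R p.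

(* there is a walk of length n (= n edges) from u to v *)
Definition walk_len (adj : V -> V -> Prop) (u v : V) (n : nat) : Prop :=
  exists p, walk adj u v p /\ length p = S n.

Definition dist (adj : V -> V -> Prop) (u v : V) (n : nat) : Prop :=
  walk_len adj u v n /\ forall m, walk_len adj u v m -> n <= m.

Definition geodesic (adj : V -> V -> Prop) (u v : V) (p : list V) : Prop :=
  walk adj u v p /\ dist adj u v (length p - 1).

Definition cyc (R : V -> V -> Prop) (c : list V) : Prop :=
  match c with
  | [] => False
  | a :: _ => chain R (c ++ [a])
  end.

Definition simple_loop (adj : V -> V -> Prop) (c : list V) : Prop :=
  3 <= length c /\ NoDup c /\ cyc adj c.

Definition simplicial_graph (adj : V -> V -> Prop) : Prop :=
  (forall u v, adj u v -> adj v u) /\ (forall u, ~ adj u u).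

Definition connected_graph (adj : V -> V -> Prop) : Prop :=
  forall u v, exists p, walk adj u v p.

(* subgraph between positions a and b (inclusive) of a vertex sequence *)
Definition subpath (g : list V) (a b : nat) : list V :=
  firstn (S (b - a)) (skipn a g).

(* Gamma tree-graded w.r.t. the family of subgraphs (Vs i, Es i), i : I.
   Vs i = vertex set of Gamma_i, Es i = (symmetric) edge relation of Gamma_i. *)
Definition tree_graded (I : Type) (adj : V -> V -> Prop)
    (Vs : I -> V -> Prop) (Es : I -> V -> V -> Prop) : Prop :=
  (forall i u v, Es i u v -> adj u v /\ Vs i u /\ Vs i v) /\
  (forall i u v, Es i u v -> Es i v u) /\
  (forall i, exists v, Vs i v) /\
  (forall i u v, Vs i u -> Vs i v -> exists p, walk (Es i) u v p) /\
  (forall v, exists i, Vs i v) /\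
  (forall c, simple_loop adj c -> exists i, Forall (Vs i) c /\ cyc (Es i) c) /\
  (forall i j, i <> j ->
     ~ ((forall v, Vs i v -> Vs j v) /\ (forall u v, Es i u v -> Es j u v))) /\
  (forall i j, i <> j -> forall u v,
     Vs i u -> Vs j u -> Vs i v -> Vs j v -> u = v).

End Graphs.

(* Main.v *)
Require Import Defs.
From Stdlib Require Import List Arith Lia Classical ClassicalEpsilon.
Import ListNotations.

Lemma last_nth {V} (l : list V) d : last l d = nth (length l - 1) l d.
Proof.
  induction l as [|a l IH]; simpl; auto.
  destruct l as [|b l]; simpl; auto.
  simpl in IH. rewrite IH. now rewrite Nat.sub_0_r.
Qed.

Lemma hd_nth {V} (l : list V) d : hd d l = nth 0 l d.
Proof. destruct l; reflexivity. Qed.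

Lemma chain_iff {V} (R : V -> V -> Prop) (l : list V) (d : V) :
  chain R l <-> forall t, S t < length l -> R (nth t l d) (nth (S t) l d).
Proof.
  induction l as [|a l IH]; simpl.
  - split; auto. intros _ t H; lia.
  - destruct l as [|b l'].
    + split; auto. intros _ t H; simpl in H; lia.
    + change (chain R (a :: b :: l')) with (R a b /\ chain R (b :: l')).
      rewrite IH. split.
      * intros [Hab H] t Ht. destruct t; auto. apply H. simpl in *; lia.
      * intros H. split. apply (H 0); simpl; lia. intros t Ht. apply (H (S t)). simpl in *; lia.
Qed.

Lemma chain_mono {V} (R R' : V -> V -> Prop) l :
  (forall u v, In u l -> In v l -> R u v -> R' u v) -> chain R l -> chain R' l.
Proof.
  destruct l as [|d l0]. simpl; auto.
  intros H Hc. rewrite chain_iff with (d := d) in *. intros t Ht.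
  apply H; [apply nth_In; lia | apply nth_In; lia | auto].
Qed.

Lemma chain_skipn {V} (R : V -> V -> Prop) n l : chain R l -> chain R (skipn n l).
Proof.
  destruct l as [|d l0]. destruct n; simpl; auto.
  rewrite !chain_iff with (d := d). intros H t Ht.
  rewrite length_skipn in Ht. rewrite !nth_skipn. replace (n + S t) with (S (n+t)) by lia.
  apply H. lia.
Qed.

Lemma chain_firstn {V} (R : V -> V -> Prop) n l : chain R l -> chain R (firstn n l).
Proof.
  destruct l as [|d l0]. destruct n; simpl; auto.
  rewrite !chain_iff with (d := d). intros H t Ht.
  rewrite length_firstn in Ht. rewrite !nth_firstn.
  replace (t <? n) with true by (symmetry; apply Nat.ltb_lt; lia).
  replace (S t <? n) with true by (symmetry; apply Nat.ltb_lt; lia).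
  apply H. lia.
Qed.

Lemma chain_rev {V} (R : V -> V -> Prop) l :
  (forall u v, R u v -> R v u) -> chain R l -> chain R (rev l).
Proof.
  destruct l as [|d l0]. simpl; auto.
  intros Hs. rewrite !chain_iff with (d := d). intros H t Ht.
  rewrite length_rev in Ht. rewrite !rev_nth by lia.
  apply Hs. set (L := length (d :: l0)) in *.
  replace (L - S t) with (S (L - S (S t))) by lia. apply H. lia.
Qed.

Lemma chain_app {V} (R : V -> V -> Prop) l1 l2 d :
  chain R l1 -> chain R l2 -> (l1 <> [] -> l2 <> [] -> R (last l1 d) (hd d l2)) ->
  chain R (l1 ++ l2).
Proof.
  induction l1 as [|a l1 IH]; simpl; auto.
  intros H1 H2 H3. destruct l1 as [|b l1].
  - simpl. destruct l2 as [|c l2]; simpl; auto. split; auto.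
    apply (H3 ltac:(discriminate) ltac:(discriminate)).
  - destruct H1 as [Hab H1]. simpl. split; auto. apply IH; auto.
    intros _ Hn. apply H3; auto; discriminate.
Qed.

Lemma chain_app_r {V} (R : V -> V -> Prop) l1 l2 : chain R (l1 ++ l2) -> chain R l2.
Proof.
  intros H. pose proof (chain_skipn R (length l1) _ H) as H'.
  rewrite skipn_app, skipn_all, Nat.sub_diag in H'. simpl in H'. exact H'.
Qed.

Lemma last_cons_ne {V} (a : V) l d : l <> [] -> last (a :: l) d = last l d.
Proof. destruct l; [congruence| reflexivity]. Qed.

Lemma last_indep {V} (l : list V) d d' : l <> [] -> last l d = last l d'.
Proof.
  intros H. rewrite !last_nth. apply nth_indep. destruct l; [congruence|simpl; lia].
Qed.

Lemma last_app_ne {V} (l1 l2 : list V) d : l2 <> [] -> last (l1 ++ l2) d = last l2 d.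
Proof.
  intros H. induction l1 as [|a l1 IH]; simpl; auto.
  rewrite <- IH. destruct (l1 ++ l2) eqn:E; auto. destruct l2; [congruence|].
  apply app_eq_nil in E as [_ E]; discriminate.
Qed.

Lemma shorten {V} (R : V -> V -> Prop) p : forall u v,
  walk R u v p -> exists q, walk R u v q /\ NoDup q /\ incl q p.
Proof.
  induction p as [|a p IH]; intros u v [Hne [Hh [Hl Hc]]]. congruence.
  simpl in Hh. subst a. destruct p as [|b p].
  - exists [u]. simpl in Hl. subst v. repeat split; auto; try discriminate.
    constructor; auto. constructor. apply incl_refl.
  - destruct Hc as [Hub Hc].
    assert (Hw : walk R b v (b :: p)).
    { repeat split; auto; try discriminate. rewrite last_cons_ne in Hl by discriminate.
      rewrite <- Hl. apply last_indep. discriminate. }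
    destruct (IH b v Hw) as [q [[Hqne [Hqh [Hql Hqc]]] [Hnd Hinc]]].
    destruct (classic (In u q)) as [Hin|Hin].
    + destruct (in_split _ _ Hin) as [q1 [q2 Hq]].
      exists (u :: q2). subst q. repeat split; try discriminate.
      * rewrite last_app_ne in Hql by discriminate. rewrite <- Hql. apply last_indep; discriminate.
      * apply chain_app_r in Hqc; auto.
      * apply NoDup_app_remove_l in Hnd; auto.
      * intros z Hz. right. apply Hinc. apply in_or_app. right; auto.
    + exists (u :: q). repeat split; try discriminate.
      * rewrite last_cons_ne by auto. rewrite <- Hql. apply last_indep; auto.
      * change (u :: q) with ([u] ++ q). apply chain_app with (d := u); simpl; auto.
        intros _ _. destruct q; [congruence|]. simpl in Hqh. subst. auto.
      * constructor; auto.
      * intros z [Hz|Hz]; [left; auto | right; apply Hinc; auto].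
Qed.

Lemma walk_nth {V} (R : V -> V -> Prop) u v p :
  walk R u v p <-> (p <> [] /\ nth 0 p u = u /\ nth (length p - 1) p u = v /\
     forall t, S t < length p -> R (nth t p u) (nth (S t) p u)).
Proof.
  unfold walk. rewrite hd_nth, last_nth, (chain_iff R p u). tauto.
Qed.

Lemma walk_ends {V} (R : V -> V -> Prop) u v p : walk R u v p -> In u p /\ In v p.
Proof.
  rewrite walk_nth. intros [Hne [H0 [H1 _]]].
  destruct p as [|a p]; [congruence|]. split.
  - rewrite <- H0. apply nth_In; simpl; lia.
  - rewrite <- H1. apply nth_In; simpl; lia.
Qed.

Lemma walk_firstn {V} (R : V -> V -> Prop) u v p t :
  walk R u v p -> t < length p -> walk R u (nth t p u) (firstn (S t) p).
Proof.
  rewrite !walk_nth. intros [Hne [H0 [H1 Hc]]] Ht.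
  rewrite length_firstn. replace (Init.Nat.min (S t) (length p)) with (S t) by lia.
  repeat split.
  - destruct p; simpl in *; [lia|discriminate].
  - rewrite nth_firstn. simpl. destruct p; simpl in *; [lia|auto].
  - rewrite nth_firstn. replace (S t - 1 <? S t) with true by (symmetry; apply Nat.ltb_lt; lia).
    f_equal; lia.
  - intros s Hs. rewrite !nth_firstn.
    replace (s <? S t) with true by (symmetry; apply Nat.ltb_lt; lia).
    replace (S s <? S t) with true by (symmetry; apply Nat.ltb_lt; lia).
    apply Hc; lia.
Qed.

Lemma walk_skipn {V} (R : V -> V -> Prop) u v p t :
  walk R u v p -> t < length p -> walk R (nth t p u) v (skipn t p).
Proof.
  rewrite !walk_nth. intros [Hne [H0 [H1 Hc]]] Ht.
  rewrite length_skipn. repeat split.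
  - intros E. apply (f_equal (@length V)) in E. rewrite length_skipn in E. simpl in E; lia.
  - rewrite nth_skipn. rewrite Nat.add_0_r. apply nth_indep; lia.
  - rewrite nth_skipn. rewrite <- H1. rewrite (nth_indep p (nth t p u) u) by lia. f_equal; lia.
  - intros s Hs. rewrite !nth_skipn.
    rewrite (nth_indep p (nth t p u) u) by lia. rewrite (nth_indep p (nth t p u) u) by lia.
    replace (t + S s) with (S (t + s)) by lia. apply Hc; lia.
Qed.

Lemma walk_rev {V} (R : V -> V -> Prop) u v p :
  (forall a b, R a b -> R b a) -> walk R u v p -> walk R v u (rev p).
Proof.
  intros Hs [Hne [Hh [Hl Hc]]]. repeat split.
  - intros E. apply (f_equal (@length V)) in E. rewrite length_rev in E.
    destruct p; simpl in *; [congruence|lia].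
  - rewrite hd_nth. destruct p as [|a p]; [congruence|].
    rewrite rev_nth by (simpl; lia). rewrite last_nth in Hl. rewrite <- Hl. simpl length.
    apply nth_indep; simpl; lia.
  - rewrite last_nth, length_rev. destruct p as [|a p]; [congruence|].
    rewrite rev_nth by (simpl; lia). rewrite hd_nth in Hh. rewrite <- Hh.
    replace (length (a :: p) - S (length (a :: p) - 1)) with 0 by (simpl; lia).
    reflexivity.
  - apply chain_rev; auto.
Qed.

Lemma walk_app {V} (R : V -> V -> Prop) u w v p q :
  walk R u w p -> walk R w v q -> walk R u v (p ++ tl q).
Proof.
  intros [Hne [Hh [Hl Hc]]] [Hne' [Hh' [Hl' Hc']]].
  destruct q as [|b q]; [congruence|]. simpl in Hh'. subst b. simpl.
  destruct p as [|a p]; [congruence|]. simpl in Hh. subst a.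
  repeat split.
  - discriminate.
  - destruct q as [|c q].
    + simpl in Hl'. rewrite app_nil_r. congruence.
    + rewrite last_app_ne by discriminate. rewrite last_cons_ne in Hl' by discriminate.
      rewrite <- Hl'. apply last_indep; discriminate.
  - apply chain_app with (d := u); auto.
    + destruct q as [|c q]; simpl; auto. exact (proj2 Hc').
    + intros _ Hq. destruct q as [|c q]; [congruence|]. cbn [hd].
      assert (E : last (u :: p) u = w) by (rewrite <- Hl; apply last_indep; discriminate).
      simpl in E |- *. rewrite E. exact (proj1 Hc').
Qed.

Lemma length_app_tl {V} (p q : list V) : q <> [] -> length (p ++ tl q) = length p + length q - 1.
Proof. intros H. destruct q; [congruence|]. rewrite length_app. simpl. lia. Qed.

Lemma es_forall {V I} (adj : V -> V -> Prop) (Vs : I -> V -> Prop) Es i u v p :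
  (forall i u v, Es i u v -> adj u v /\ Vs i u /\ Vs i v) ->
  walk (Es i) u v p -> Vs i u -> Forall (Vs i) p.
Proof.
  intros H1 Hw Hu. apply walk_nth in Hw as [Hne [H0 [_ Hc]]].
  apply Forall_forall. intros z Hz. apply (In_nth _ _ u) in Hz as [t [Ht Hz]]. subst z.
  destruct t as [|t]. rewrite H0; auto.
  apply (H1 i (nth t p u) _ (Hc t Ht)).
Qed.

Lemma edge_in_piece {V I} (adj : V -> V -> Prop) (Vs : I -> V -> Prop) Es :
  simplicial_graph adj -> tree_graded adj Vs Es ->
  forall i u v, Vs i u -> Vs i v -> adj u v -> Es i u v.
Proof.
  intros [Hsym Hirr] (H1 & H2 & H3 & H4 & H5 & H6 & H7 & H8) i u v Hu Hv Ha.
  apply NNPP. intros Hn.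
  assert (Huv : u <> v) by (intros ->; apply (Hirr v); auto).
  destruct (H4 i v u Hv Hu) as [p Hp].
  destruct (shorten _ _ _ _ Hp) as [q [Hq [Hnd _]]].
  pose proof (es_forall adj Vs Es i v u q H1 Hq Hv) as Hf.
  destruct Hq as [Hne [Hh [Hl Hc]]].
  destruct q as [|a q]; [congruence|]. simpl in Hh; subst a.
  destruct q as [|b q]. { simpl in Hl. congruence. }
  destruct q as [|c q].
  { simpl in Hl. subst b. apply Hn. apply H2. exact (proj1 Hc). }
  assert (Hcy : cyc adj (v :: b :: c :: q)).
  { change (chain adj ((v :: b :: c :: q) ++ [v])). apply chain_app with (d := v).
    - apply chain_mono with (R := Es i); auto. intros x y _ _ Hxy. apply (H1 _ _ _ Hxy).
    - simpl; auto.
    - intros _ _. simpl hd. rewrite Hl. auto. }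
  destruct (H6 (v :: b :: c :: q)) as [j [Hfj Hcj]].
  { split; [simpl; lia | split; auto]. }
  assert (Hlin : In u (v :: b :: c :: q)).
  { rewrite <- Hl. rewrite last_nth. apply nth_In. simpl; lia. }
  destruct (classic (i = j)) as [<-|Hij].
  - apply Hn. change (chain (Es i) ((v :: b :: c :: q) ++ [v])) in Hcj. rewrite (chain_iff _ _ v) in Hcj.
    specialize (Hcj (length (v :: b :: c :: q) - 1)).
    rewrite length_app in Hcj. simpl length in Hcj.
    rewrite app_nth1 in Hcj by (simpl; lia). rewrite app_nth2 in Hcj by (simpl; lia).
    replace (S (S (S (length q))) - 1) with (length (v::b::c::q) - 1) in Hcj by (simpl; lia).
    rewrite <- last_nth, Hl in Hcj.
    replace (S (length (v :: b :: c :: q) - 1) - length (v :: b :: c :: q)) with 0 in Hcj by (simpl; lia).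
    apply Hcj. simpl; lia.
  - apply Huv. rewrite Forall_forall in Hf, Hfj.
    apply (H8 i j Hij); [apply Hf; auto| apply Hfj; auto| apply Hf; left; auto| apply Hfj; left; auto].
Qed.

Lemma in_last {V} (l : list V) d : l <> [] -> In (last l d) l.
Proof. intros H. rewrite last_nth. apply nth_In. destruct l; [congruence|simpl; lia]. Qed.

Lemma excursion {V I} (adj : V -> V -> Prop) (Vs : I -> V -> Prop) Es :
  simplicial_graph adj -> tree_graded adj Vs Es ->
  forall i u v m, Vs i u -> Vs i v -> chain adj (u :: m ++ [v]) -> m <> [] ->
  Forall (fun z => ~ Vs i z) m -> u = v.
Proof.
  intros [Hsym Hirr] (H1 & H2 & H3 & H4 & H5 & H6 & H7 & H8) i u v m Hu Hv Hch Hm Hout.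
  apply NNPP. intros Huv.
  destruct m as [|a m']; [congruence|].
  destruct Hch as [Hua Hch].
  assert (Hw : walk adj a v (a :: m' ++ [v])).
  { repeat split; try discriminate; auto.
    change (a :: m' ++ [v]) with ((a :: m') ++ [v]). apply last_last. }
  destruct (shorten _ _ _ _ Hw) as [q [[Hqne [Hqh [Hql Hqc]]] [Hqnd Hqinc]]].
  destruct (H4 i v u Hv Hu) as [p Hp].
  destruct (shorten _ _ _ _ Hp) as [r [Hr [Hrnd _]]].
  pose proof (es_forall adj Vs Es i v u r H1 Hr Hv) as Hrf.
  destruct Hr as [Hrne [Hrh [Hrl Hrc]]].
  destruct r as [|v' r1]; [congruence|]. simpl in Hrh; subst v'.
  assert (Hr1 : r1 <> []) by (intros ->; simpl in Hrl; congruence).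
  rewrite last_cons_ne in Hrl by auto.
  destruct q as [|a' q1]; [congruence|]. simpl in Hqh; subst a'.
  assert (Haout : ~ Vs i a) by (inversion Hout; auto).
  assert (Hq1 : q1 <> []) by (intros ->; simpl in Hql; subst v; auto).
  rewrite last_cons_ne in Hql by auto.
  assert (Hvr1 : ~ In v r1) by (inversion Hrnd; auto).
  assert (Hcy : cyc adj (a :: q1 ++ r1)).
  { change (chain adj (((a :: q1) ++ r1) ++ [a])). rewrite <- app_assoc.
    apply chain_app with (d := a); auto.
    - apply chain_app with (d := a).
      + apply chain_mono with (R := Es i). intros x y _ _ Hxy; apply (H1 _ _ _ Hxy).
        change (v :: r1) with ([v] ++ r1) in Hrc. apply chain_app_r in Hrc; auto.
      + simpl; auto.
      + intros _ _. simpl hd. rewrite (last_indep _ a v) by auto. rewrite Hrl. auto.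
    - intros _ _. rewrite last_cons_ne by auto. rewrite Hql.
      destruct r1 as [|w r1]; [congruence|]. simpl hd. apply (H1 i v w). exact (proj1 Hrc). }
  destruct (H6 (a :: q1 ++ r1)) as [j [Hfj _]].
  { split; [|split; auto].
    - simpl. rewrite length_app. destruct q1; [congruence|]. destruct r1; [congruence|]. simpl; lia.
    - change (a :: q1 ++ r1) with ((a :: q1) ++ r1). apply NoDup_app; auto.
      + inversion Hrnd; auto.
      + intros z Hz Hz2. apply Hqinc in Hz.
        assert (Hzi : Vs i z) by (rewrite Forall_forall in Hrf; apply Hrf; right; auto).
        change (a :: m' ++ [v]) with ((a :: m') ++ [v]) in Hz. apply in_app_or in Hz as [Hz|[Hz|[]]].
        * rewrite Forall_forall in Hout. apply (Hout z Hz Hzi).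
        * subst z. auto. }
  rewrite Forall_forall in Hfj, Hrf.
  assert (Hj_a : Vs j a) by (apply Hfj; left; auto).
  assert (Hj_u : Vs j u).
  { apply Hfj. right. apply in_or_app. right. rewrite <- Hrl. apply in_last; auto. }
  assert (Hj_v : Vs j v).
  { apply Hfj. right. apply in_or_app. left. rewrite <- Hql. apply in_last; auto. }
  destruct (classic (i = j)) as [<-|Hij].
  - auto.
  - apply Huv. apply (H8 i j Hij); auto.
Qed.

Lemma least_nat (P : nat -> Prop) : (exists n, P n) -> exists n, P n /\ forall m, P m -> n <= m.
Proof.
  intros [n Hn]. apply NNPP. intros Hno.
  assert (forall k, forall j, j <= k -> ~ P j).
  { induction k as [|k IH]; intros j Hj HP.
    - apply Hno. exists j. split; auto. intros; lia.
    - destruct (Nat.eq_dec j (S k)) as [->|Hne]; [|apply (IH j); auto; lia].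
      apply Hno. exists (S k). split; auto. intros m Hm.
      destruct (le_lt_dec (S k) m); auto. exfalso. apply (IH m); auto; lia. }
  apply (H n n); auto.
Qed.

Definition dd {V} (adj : V -> V -> Prop) (e v : V) : nat :=
  epsilon (inhabits 0) (fun n => dist adj e v n).

Lemma dist_dd {V} (adj : V -> V -> Prop) e v :
  connected_graph adj -> dist adj e v (dd adj e v).
Proof.
  intros Hc. unfold dd. apply epsilon_spec.
  destruct (Hc e v) as [p Hp].
  destruct (least_nat (fun n => walk_len adj e v n)) as [n [Hn Hmin]].
  { exists (length p - 1). exists p. split; auto. destruct Hp as [Hne _].
    destruct p; [congruence|simpl; lia]. }
  exists n. split; auto.
Qed.

Lemma dist_unique {V} (adj : V -> V -> Prop) u v n m :
  dist adj u v n -> dist adj u v m -> n = m.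
Proof. intros [H1 H2] [H3 H4]. specialize (H2 m H3). specialize (H4 n H1). lia. Qed.

Lemma geo_len {V} (adj : V -> V -> Prop) e x g :
  connected_graph adj -> geodesic adj e x g -> length g = S (dd adj e x).
Proof.
  intros Hc [[Hne _] Hd]. pose proof (dist_unique _ _ _ _ _ Hd (dist_dd adj e x Hc)).
  destruct g; [congruence|simpl in *; lia].
Qed.

Lemma geo_exists {V} (adj : V -> V -> Prop) e x :
  connected_graph adj -> exists g, geodesic adj e x g.
Proof.
  intros Hc. destruct (dist_dd adj e x Hc) as [[p [Hp Hl]] Hm].
  exists p. split; auto. rewrite Hl. simpl. rewrite Nat.sub_0_r. split; [exists p; auto|auto].
Qed.

Lemma geo_prefix {V} (adj : V -> V -> Prop) e x g t :
  connected_graph adj -> geodesic adj e x g -> t < length g ->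
  geodesic adj e (nth t g e) (firstn (S t) g) /\ dd adj e (nth t g e) = t.
Proof.
  intros Hc [Hw Hd] Ht.
  assert (Hf : walk adj e (nth t g e) (firstn (S t) g)) by (apply (walk_firstn adj e x); auto).
  assert (Hlf : length (firstn (S t) g) = S t) by (rewrite length_firstn; lia).
  assert (Hdist : dist adj e (nth t g e) t).
  { split. exists (firstn (S t) g); auto.
    intros m [h [Hh Hlh]].
    pose proof (walk_skipn _ _ _ _ t Hw Ht) as Hs.
    pose proof (walk_app _ _ _ _ _ _ Hh Hs) as Ha.
    destruct Hd as [_ Hmin].
    assert (Hsk : skipn t g <> []) by (destruct Hs; auto).
    assert (Hwl : walk_len adj e x (length (h ++ tl (skipn t g)) - 1)).
    { exists (h ++ tl (skipn t g)). split; auto. rewrite length_app_tl by auto. rewrite length_skipn. lia. }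
    specialize (Hmin _ Hwl).
    rewrite length_app_tl in Hmin by auto. rewrite length_skipn in Hmin. lia. }
  split.
  - split; auto. rewrite Hlf. simpl. rewrite Nat.sub_0_r. auto.
  - apply (dist_unique adj e (nth t g e)); auto. apply dist_dd; auto.
Qed.

Lemma geo_inj {V} (adj : V -> V -> Prop) e x g s t :
  connected_graph adj -> geodesic adj e x g -> s < length g -> t < length g ->
  nth s g e = nth t g e -> s = t.
Proof.
  intros Hc Hg Hs Ht E.
  pose proof (proj2 (geo_prefix adj e x g s Hc Hg Hs)).
  pose proof (proj2 (geo_prefix adj e x g t Hc Hg Ht)). congruence.
Qed.

Lemma length_subpath {V} (p : list V) a b : a <= b -> b < length p -> length (subpath p a b) = S (b - a).
Proof. intros. unfold subpath. rewrite length_firstn, length_skipn. lia. Qed.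

Lemma nth_subpath {V} (p : list V) a b k d : nth k (subpath p a b) d = if k <=? b - a then nth (a + k) p d else d.
Proof.
  unfold subpath. rewrite nth_firstn, nth_skipn.
  destruct (k <? S (b - a)) eqn:E1; destruct (k <=? b - a) eqn:E2; auto;
  [apply Nat.ltb_lt in E1; apply Nat.leb_nle in E2 | apply Nat.ltb_nlt in E1; apply Nat.leb_le in E2]; lia.
Qed.

Lemma walk_subpath {V} (R : V -> V -> Prop) u v p a b :
  walk R u v p -> a <= b -> b < length p -> walk R (nth a p u) (nth b p u) (subpath p a b).
Proof.
  intros Hw Hab Hb. pose proof (walk_skipn _ _ _ _ a Hw ltac:(lia)) as Hs.
  pose proof (walk_firstn _ _ _ _ (b - a) Hs ltac:(rewrite length_skipn; lia)) as Hf.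
  rewrite nth_skipn in Hf. replace (a + (b - a)) with b in Hf by lia.
  rewrite (nth_indep p (nth a p u) u) in Hf by lia. exact Hf.
Qed.

Lemma excursion_nth {V I} (adj : V -> V -> Prop) (Vs : I -> V -> Prop) Es :
  simplicial_graph adj -> tree_graded adj Vs Es ->
  forall i u v w, Vs i u -> Vs i v -> walk adj u v w -> 3 <= length w ->
  (forall t, 0 < t -> t < length w - 1 -> ~ Vs i (nth t w u)) -> u = v.
Proof.
  intros Hs Ht i u v w Hu Hv [Hne [Hh [Hl Hc]]] Hlen Hint.
  destruct w as [|a w']; [congruence|]. simpl in Hh; subst a.
  assert (Hw' : w' <> []) by (intros ->; simpl in Hlen; lia).
  pose proof (app_removelast_last u Hw') as E.
  set (m := removelast w') in *. set (b := last w' u) in *.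
  assert (Hb : b = v) by (subst b; rewrite <- Hl; symmetry; apply last_cons_ne; auto).
  rewrite Hb in E. rewrite E in Hc, Hlen, Hint.
  apply (excursion adj Vs Es Hs Ht i u v m Hu Hv Hc).
  - intros ->. simpl in Hlen. lia.
  - apply Forall_forall. intros z Hz. apply (In_nth _ _ u) in Hz as [k [Hk Hz]].
    specialize (Hint (S k)). simpl in Hint. rewrite length_app in Hint. simpl in Hint.
    rewrite app_nth1 in Hint by lia. rewrite Hz in Hint. apply Hint; lia.
Qed.

Lemma nth_tl {V} (l : list V) k d : nth k (tl l) d = nth (S k) l d.
Proof. destruct l; simpl; auto. destruct k; auto. Qed.

Lemma geo_last {V} (adj : V -> V -> Prop) e x g :
  geodesic adj e x g -> nth (length g - 1) g e = x.
Proof. intros [[Hne [_ [Hl _]]] _]. rewrite last_nth in Hl. exact Hl. Qed.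

Lemma geo_first {V} (adj : V -> V -> Prop) e x g :
  geodesic adj e x g -> nth 0 g e = e.
Proof. intros [[Hne [Hh _]] _]. rewrite hd_nth in Hh. exact Hh. Qed.

Lemma proj_lemma {V I} (adj : V -> V -> Prop) (Vs : I -> V -> Prop) Es e :
  simplicial_graph adj -> connected_graph adj -> tree_graded adj Vs Es ->
  forall i p, Vs i p -> (forall v, Vs i v -> dd adj e p <= dd adj e v) ->
  forall z g, Vs i z -> geodesic adj e z g ->
  nth (dd adj e p) g e = p /\
  forall t, dd adj e p <= t -> t < length g -> Vs i (nth t g e).
Proof.
  intros Hs Hc Ht i p Hp Hmin z g Hz Hg.
  set (D := dd adj e) in *.
  pose proof (geo_len adj e z g Hc Hg) as Hlg. fold D in Hlg.
  pose proof (geo_last adj e z g Hg) as Hgl. pose proof (geo_first adj e z g Hg) as Hgf.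
  assert (Hsym : forall a b, adj a b -> adj b a) by apply Hs.
  assert (Part1 : nth (D p) g e = p).
  { destruct (least_nat (fun s => s < length g /\ Vs i (nth s g e))) as [s [[Hs1 Hsv] Hsmin]].
    { exists (length g - 1). split; [lia|]. rewrite Hgl; auto. }
    destruct (geo_exists adj e p Hc) as [h Hh].
    pose proof (geo_len adj e p h Hc Hh) as Hlh. fold D in Hlh.
    pose proof (geo_last adj e p h Hh) as Hhl. pose proof (geo_first adj e p h Hh) as Hhf.
    assert (Hhout : forall t, t < D p -> ~ Vs i (nth t h e)).
    { intros t Htp Hv. pose proof (proj2 (geo_prefix adj e p h t Hc Hh ltac:(lia))) as E.
      fold D in E. specialize (Hmin _ Hv). lia. }
    assert (Hpq : p = nth s g e).
    { destruct (Nat.eq_dec (D p) 0) as [H0|H0].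
      - replace (length h - 1) with 0 in Hhl by lia. rewrite Hhf in Hhl. subst p.
        assert (Hs0 : 0 < length g) by lia. assert (Hv0 : Vs i (nth 0 g e)) by (rewrite Hgf; auto).
        specialize (Hsmin 0 (conj Hs0 Hv0)). assert (s = 0) by lia.
        subst s. auto.
      - assert (Hs0 : s <> 0).
        { intros ->. rewrite Hgf in Hsv. apply (Hhout 0); [lia|]. rewrite Hhf; auto. }
        destruct Hg as [Hgw Hgd]. destruct Hh as [Hhw Hhd].
        pose proof (walk_rev adj e p h Hsym Hhw) as Hr.
        pose proof (walk_firstn adj e z g s Hgw Hs1) as Hf.
        pose proof (walk_app _ _ _ _ _ _ Hr Hf) as Hw.
        assert (Hfne : firstn (S s) g <> []) by (destruct Hf; auto).
        assert (HlW : length (rev h ++ tl (firstn (S s) g)) = S (D p) + S s - 1).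
        { rewrite length_app_tl by auto. rewrite length_rev, length_firstn. lia. }
        apply (excursion_nth adj Vs Es Hs Ht i p (nth s g e) _ Hp Hsv Hw); [lia|].
        intros t Ht0 Ht1. rewrite HlW in Ht1.
        destruct (le_lt_dec (S (D p)) t) as [Hle|Hlt].
        + rewrite app_nth2 by (rewrite length_rev; lia). rewrite length_rev, nth_tl, nth_firstn.
          replace (S (t - length h) <? S s) with true by (symmetry; apply Nat.ltb_lt; lia).
          rewrite (nth_indep g p e) by lia. intros Hv.
          assert (Hlt1 : S (t - length h) < length g) by lia.
          specialize (Hsmin (S (t - length h)) (conj Hlt1 Hv)). lia.
        + rewrite app_nth1 by (rewrite length_rev; lia). rewrite rev_nth by lia.
          rewrite (nth_indep h p e) by lia. apply Hhout. lia. }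
    pose proof (proj2 (geo_prefix adj e z g s Hc Hg Hs1)) as E. fold D in E.
    rewrite <- Hpq in E. rewrite E. auto. }
  split; auto.
  intros t Ht1 Ht2. apply NNPP. intros Hn.
  destruct (least_nat (fun t1 => D p <= t1 /\ t1 < length g /\ ~ Vs i (nth t1 g e))) as [t1 [[Ha1 [Ha2 Ha3]] Hamin]].
  { exists t; auto. }
  assert (Ht1p : t1 <> D p) by (intros ->; rewrite Part1 in Ha3; auto).
  assert (Hprev : Vs i (nth (t1 - 1) g e)).
  { apply NNPP. intros Hv. assert (A1 : D p <= t1 - 1) by lia. assert (A2 : t1 - 1 < length g) by lia.
    specialize (Hamin (t1 - 1) (conj A1 (conj A2 Hv))). lia. }
  destruct (least_nat (fun t2 => t1 < t2 /\ t2 < length g /\ Vs i (nth t2 g e))) as [t2 [[Hb1 [Hb2 Hb3]] Hbmin]].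
  { exists (length g - 1). split; [|split; [lia|rewrite Hgl; auto]].
    destruct (Nat.eq_dec t1 (length g - 1)) as [E|E]; [|lia]. rewrite E, Hgl in Ha3. tauto. }
  pose proof (walk_subpath adj e z g (t1 - 1) t2 (proj1 Hg) ltac:(lia) Hb2) as Hw.
  assert (HlW : length (subpath g (t1 - 1) t2) = S (t2 - (t1 - 1))) by (apply length_subpath; lia).
  assert (E := excursion_nth adj Vs Es Hs Ht i _ _ _ Hprev Hb3 Hw).
  assert (E' : nth (t1 - 1) g e = nth t2 g e).
  { apply E; [lia|]. intros k Hk0 Hk1. rewrite HlW in Hk1. rewrite nth_subpath.
    replace (k <=? t2 - (t1 - 1)) with true by (symmetry; apply Nat.leb_le; lia).
    rewrite (nth_indep g _ e) by lia. intros Hv.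
    destruct (Nat.eq_dec (t1 - 1 + k) t1) as [Ek|Ek].
    - rewrite Ek in Hv. auto.
    - assert (A1 : t1 < t1 - 1 + k) by lia. assert (A2 : t1 - 1 + k < length g) by lia.
      specialize (Hbmin (t1 - 1 + k) (conj A1 (conj A2 Hv))). lia. }
  assert (A3 : t1 - 1 < length g) by lia.
  pose proof (geo_inj adj e z g (t1 - 1) t2 Hc Hg A3 Hb2 E'). lia.
Qed.

Lemma proj_unique {V I} (adj : V -> V -> Prop) (Vs : I -> V -> Prop) Es e :
  simplicial_graph adj -> connected_graph adj -> tree_graded adj Vs Es ->
  forall i p, Vs i p -> (forall v, Vs i v -> dd adj e p <= dd adj e v) ->
  forall v, Vs i v -> v <> p -> dd adj e p < dd adj e v.
Proof.
  intros Hs Hc Ht i p Hp Hmin v Hv Hvp.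
  destruct (geo_exists adj e v Hc) as [g Hg].
  destruct (proj_lemma adj Vs Es e Hs Hc Ht i p Hp Hmin v g Hv Hg) as [H1 _].
  specialize (Hmin v Hv). destruct (Nat.eq_dec (dd adj e p) (dd adj e v)) as [E|E]; [|lia].
  exfalso. apply Hvp. assert (Hl := geo_last adj e v g Hg).
  rewrite (geo_len adj e v g Hc Hg) in Hl. replace (S (dd adj e v) - 1) with (dd adj e v) in Hl by lia.
  rewrite E in H1. congruence.
Qed.

Lemma exists_min {V I} (adj : V -> V -> Prop) (Vs : I -> V -> Prop) e i w :
  Vs i w -> exists p, Vs i p /\ forall v, Vs i v -> dd adj e p <= dd adj e v.
Proof.
  intros Hw. destruct (least_nat (fun n => exists v, Vs i v /\ dd adj e v = n)) as [n [[p [Hp Hpn]] Hm]].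
  { exists (dd adj e w). exists w; auto. }
  exists p. split; auto. intros v Hv. rewrite Hpn. apply Hm. exists v; auto.
Qed.

Lemma subpath_single {V} (g : list V) t d : t < length g -> subpath g t t = [nth t g d].
Proof.
  intros Ht. unfold subpath. rewrite Nat.sub_diag.
  pose proof (firstn_skipn t g) as E.
  remember (skipn t g) as s. destruct s as [|a s].
  - apply (f_equal (@length V)) in Heqs. rewrite length_skipn in Heqs. simpl in Heqs. lia.
  - simpl. f_equal. replace t with (t + 0) by lia. rewrite <- nth_skipn, <- Heqs. reflexivity.
Qed.

Lemma subpath_firstn {V} (g : list V) m a b : a <= b -> b < m -> subpath (firstn m g) a b = subpath g a b.
Proof.
  intros Hab Hbm. unfold subpath. rewrite skipn_firstn_comm, firstn_firstn. f_equal. lia.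
Qed.

Lemma mono_b (a b : nat -> nat) k :
  (forall j, j <= k -> a j <= b j) -> (forall j, j < k -> b j <= a (S j)) ->
  forall j, j <= k -> b j <= b k.
Proof.
  intros H1 H2 j Hj. assert (forall d, j + d <= k -> b j <= b (j + d)).
  { induction d as [|d IH]; intros Hd. rewrite Nat.add_0_r; auto.
    replace (j + S d) with (S (j + d)) by lia.
    specialize (IH ltac:(lia)). specialize (H2 (j + d) ltac:(lia)). specialize (H1 (S (j + d)) ltac:(lia)). lia. }
  specialize (H (k - j) ltac:(lia)). replace (j + (k - j)) with k in H by lia. auto.
Qed.

Lemma in_prefix_dist {V} (adj : V -> V -> Prop) e x g t v :
  connected_graph adj -> geodesic adj e x g -> t < length g -> In v (firstn (S t) g) -> dd adj e v <= t.
Proof.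
  intros Hc Hg Ht Hv. apply (In_nth _ _ e) in Hv as [k [Hk Hv]].
  rewrite length_firstn in Hk. rewrite nth_firstn in Hv.
  replace (k <? S t) with true in Hv by (symmetry; apply Nat.ltb_lt; lia). subst v.
  rewrite (proj2 (geo_prefix adj e x g k Hc Hg ltac:(lia))). lia.
Qed.

Lemma in_tl {V} (l : list V) z : In z (tl l) -> In z l.
Proof. destruct l; simpl; auto. Qed.

Lemma bridge {V I} (adj : V -> V -> Prop) (Vs : I -> V -> Prop) Es e :
  simplicial_graph adj -> connected_graph adj -> tree_graded adj Vs Es ->
  forall x n g g', geodesic adj e x g -> geodesic adj e x g' -> dd adj e x = S n ->
  ~ (exists i, Vs i x /\ Vs i (nth n g e)) -> nth n g' e = nth n g e.
Proof.
  intros Hs Hc Ht x n g g' Hg Hg' Hx HB. apply NNPP. intros Hne.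
  pose proof (geo_len adj e x g Hc Hg) as Hlg. pose proof (geo_len adj e x g' Hc Hg') as Hlg'.
  assert (Hsym : forall a b, adj a b -> adj b a) by apply Hs.
  pose proof (walk_firstn adj e x g n (proj1 Hg) ltac:(lia)) as Hf.
  pose proof (walk_firstn adj e x g' n (proj1 Hg') ltac:(lia)) as Hf'.
  pose proof (walk_rev _ _ _ _ Hsym Hf') as Hr.
  pose proof (walk_app _ _ _ _ _ _ Hr Hf) as Hw.
  destruct (shorten _ _ _ _ Hw) as [q [[Hqne [Hqh [Hql Hqc]]] [Hqnd Hqinc]]].
  set (y := nth n g e) in *. set (y' := nth n g' e) in *.
  assert (Hxq : ~ In x q).
  { intros Hin. apply Hqinc in Hin. apply in_app_or in Hin as [Hin|Hin].
    - apply in_rev in Hin. pose proof (in_prefix_dist adj e x g' n x Hc Hg' ltac:(lia) Hin). lia.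
    - apply in_tl in Hin. pose proof (in_prefix_dist adj e x g n x Hc Hg ltac:(lia) Hin). lia. }
  assert (Hadj : forall h, geodesic adj e x h -> length h = S (S n) -> adj (nth n h e) x).
  { intros h Hh Hlh. rewrite <- (geo_last adj e x h Hh). destruct Hh as [Hw' _].
    apply walk_nth in Hw' as [_ [_ [_ Hch]]]. rewrite Hlh. replace (S (S n) - 1) with (S n) by lia.
    apply Hch. lia. }
  assert (Hady : adj y x) by (apply Hadj; auto; lia).
  assert (Hady' : adj y' x) by (apply Hadj; auto; lia).
  clearbody y y'.
  destruct q as [|a q']; [congruence|]. simpl in Hqh. subst a.
  assert (Hq' : q' <> []) by (intros ->; simpl in Hql; congruence).
  destruct Ht as (H1 & H2 & H3 & H4 & H5 & H6 & H7 & H8).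
  destruct (H6 (x :: y' :: q')) as [j [Hfj _]].
  - split; [destruct q'; [congruence|simpl; lia]|split].
    + constructor; auto.
    + change (chain adj ([x] ++ ((y' :: q') ++ [x]))). apply chain_app with (d := x).
      * simpl; auto.
      * apply chain_app with (d := x); auto. simpl; auto.
        intros _ _. assert (El : last (y' :: q') x = y) by (etransitivity; [apply last_indep; discriminate | exact Hql]).
        rewrite El. simpl. auto.
      * intros _ _. simpl. apply Hsym. auto.
  - apply HB. exists j. rewrite Forall_forall in Hfj. split.
    + apply Hfj. left; auto.
    + apply Hfj. right. pose proof (in_last (y' :: q') y' ltac:(discriminate)) as Hin.
      rewrite Hql in Hin. exact Hin.
Qed.

Definition Concl {V I} (adj : V -> V -> Prop) (Vs : I -> V -> Prop) (Es : I -> V -> V -> Prop) (e x : V) : Prop :=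
  exists (k : nat) (idx : nat -> I) (xs : nat -> V) (es : nat -> V),
    xs k = x /\ es 0 = e /\
    (forall j, j <= k ->
       Vs (idx j) (es j) /\
       forall v, Vs (idx j) v -> v <> es j ->
         forall n m, dist adj e (es j) n -> dist adj e v m -> n < m) /\
    (forall g, geodesic adj e x g ->
       exists a b : nat -> nat,
         a 0 = 0 /\ b k = length g - 1 /\
         (forall j, j <= k -> a j <= b j) /\
         (forall j, j < k -> b j <= a (S j) /\ a (S j) <= b j + 1) /\
         (forall j, j <= k ->
            nth (a j) g e = es j /\ nth (b j) g e = xs j /\
            Forall (Vs (idx j)) (subpath g (a j) (b j)) /\
            chain (Es (idx j)) (subpath g (a j) (b j)))).

Lemma leb_Sk k : (S k <=? k) = false.
Proof. apply Nat.leb_gt. lia. Qed.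

Lemma proj_prop {V I} (adj : V -> V -> Prop) (Vs : I -> V -> Prop) Es e :
  simplicial_graph adj -> connected_graph adj -> tree_graded adj Vs Es ->
  forall i p, Vs i p -> (forall v, Vs i v -> dd adj e p <= dd adj e v) ->
  forall v, Vs i v -> v <> p -> forall n m, dist adj e p n -> dist adj e v m -> n < m.
Proof.
  intros Hs Hc Ht i p Hp Hmin v Hv Hvp n m Hn Hm.
  rewrite (dist_unique _ _ _ _ _ Hn (dist_dd adj e p Hc)).
  rewrite (dist_unique _ _ _ _ _ Hm (dist_dd adj e v Hc)).
  apply (proj_unique adj Vs Es e Hs Hc Ht i p Hp Hmin v Hv Hvp).
Qed.

Lemma main_ind {V I} (adj : V -> V -> Prop) (Vs : I -> V -> Prop) Es e :
  simplicial_graph adj -> connected_graph adj -> tree_graded adj Vs Es ->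
  forall n x, dd adj e x = n -> Concl adj Vs Es e x.
Proof.
  intros Hs Hc Ht n. induction n as [n IH] using lt_wf_ind. intros x Hx.
  destruct (geo_exists adj e x Hc) as [gs Hgs].
  pose proof (geo_len adj e x gs Hc Hgs) as Hlgs.
  pose proof (geo_last adj e x gs Hgs) as Hlast. pose proof (geo_first adj e x gs Hgs) as Hfirst.
  pose proof Ht as (H1 & H2 & H3 & H4 & H5 & H6 & H7 & H8).
  destruct n as [|n'].
  -
    assert (Hxe : x = e) by (rewrite Hlgs, Hx in Hlast; simpl in Hlast; congruence). clear Hlast Hfirst. subst x.
    destruct (H5 e) as [i0 Hi0].
    assert (Hmin : forall v, Vs i0 v -> dd adj e e <= dd adj e v) by (intros; rewrite Hx; lia).
    exists 0, (fun _ => i0), (fun _ => e), (fun _ => e). split; [auto|split; [auto|split]].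
    + intros j _. split; auto. apply (proj_prop adj Vs Es e Hs Hc Ht i0 e Hi0 Hmin).
    + intros g Hg. pose proof (geo_len adj e e g Hc Hg) as Hlg. rewrite Hx in Hlg.
      exists (fun _ => 0), (fun _ => 0). split; [auto|split; [lia|split; [auto|split; [intros; lia|]]]].
      intros j _. rewrite (geo_first adj e e g Hg). split; auto. split; auto.
      rewrite (subpath_single g 0 e) by lia. rewrite (geo_first adj e e g Hg). split; simpl; auto.
  - set (y := nth n' gs e).
    assert (Hy : dd adj e y = n') by (apply (proj2 (geo_prefix adj e x gs n' Hc Hgs ltac:(lia)))).
    destruct (classic (exists i, Vs i x /\ Vs i y)) as [[i [Hix Hiy]]|HB].
    +
      destruct (exists_min adj Vs e i x Hix) as [p [Hp Hpmin]].
      assert (Hpn : dd adj e p < S n') by (specialize (Hpmin y Hiy); lia).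
      destruct (IH _ Hpn p eq_refl) as [k [idx [xs [es [Hxk [He0 [Hproj Hgeo]]]]]]].
      exists (S k), (fun j => if j <=? k then idx j else i), (fun j => if j <=? k then xs j else x),
        (fun j => if j <=? k then es j else p).
      rewrite !leb_Sk. split; [auto|split; [simpl; auto|split]].
      * intros j Hj. destruct (j <=? k) eqn:Ejk.
        -- apply Nat.leb_le in Ejk. apply Hproj; auto.
        -- split; auto. apply (proj_prop adj Vs Es e Hs Hc Ht i p Hp Hpmin).
      * intros g Hg.
        pose proof (geo_len adj e x g Hc Hg) as Hlg. rewrite Hx in Hlg.
        destruct (proj_lemma adj Vs Es e Hs Hc Ht i p Hp Hpmin x g Hix Hg) as [Hgp Hgin].
        pose proof (geo_prefix adj e x g (dd adj e p) Hc Hg ltac:(lia)) as [Hg' _].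
        rewrite Hgp in Hg'.
        destruct (Hgeo _ Hg') as [a [b [Ha0 [Hbk [Hab [Hgap Hseg]]]]]].
        assert (Hlg' : length (firstn (S (dd adj e p)) g) = S (dd adj e p)) by (rewrite length_firstn; lia).
        rewrite Hlg' in Hbk. replace (S (dd adj e p) - 1) with (dd adj e p) in Hbk by lia.
        pose proof (mono_b a b k Hab (fun j Hj => proj1 (Hgap j Hj))) as Hmono.
        exists (fun j => if j <=? k then a j else dd adj e p), (fun j => if j <=? k then b j else length g - 1).
        rewrite !leb_Sk. split; [simpl; auto|split; [auto|split; [|split]]].
        -- intros j Hj. destruct (j <=? k) eqn:Ejk; [apply Nat.leb_le in Ejk; auto|lia].
        -- intros j Hj. destruct (Nat.eq_dec j k) as [->|Hjk].
           ++ rewrite Nat.leb_refl, leb_Sk. lia.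
           ++ replace (j <=? k) with true by (symmetry; apply Nat.leb_le; lia).
              replace (S j <=? k) with true by (symmetry; apply Nat.leb_le; lia). apply Hgap. lia.
        -- intros j Hj. destruct (j <=? k) eqn:Ejk.
           ++ apply Nat.leb_le in Ejk.
              specialize (Hab j Ejk). specialize (Hmono j Ejk).
              destruct (Hseg j Ejk) as [S1 [S2 [S3 S4]]].
              rewrite nth_firstn in S1, S2.
              replace (a j <? S (dd adj e p)) with true in S1 by (symmetry; apply Nat.ltb_lt; lia).
              replace (b j <? S (dd adj e p)) with true in S2 by (symmetry; apply Nat.ltb_lt; lia).
              rewrite subpath_firstn in S3, S4 by lia. auto.
           ++ assert (Hj' : j = S k) by (apply Nat.leb_gt in Ejk; lia). subst j.
              split; [auto|split; [apply (geo_last adj e x g Hg)|]].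
              assert (HF : Forall (Vs i) (subpath g (dd adj e p) (length g - 1))).
              { apply Forall_forall. intros z Hz. apply (In_nth _ _ e) in Hz as [t [Ht0 Hz]].
                rewrite length_subpath in Ht0 by lia. rewrite nth_subpath in Hz.
                replace (t <=? length g - 1 - dd adj e p) with true in Hz by (symmetry; apply Nat.leb_le; lia).
                subst z. apply Hgin; lia. }
              split; auto.
              pose proof (walk_subpath adj e x g (dd adj e p) (length g - 1) (proj1 Hg) ltac:(lia) ltac:(lia)) as [_ [_ [_ Hch]]].
              apply chain_mono with (R := adj); auto.
              rewrite Forall_forall in HF. intros u v Hu Hv Huv.
              apply (edge_in_piece adj Vs Es Hs Ht i u v); auto.
    +
      destruct (H5 x) as [R HR].
      destruct (exists_min adj Vs e R x HR) as [p [Hp Hpmin]].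
      destruct (proj_lemma adj Vs Es e Hs Hc Ht R p Hp Hpmin x gs HR Hgs) as [Hgp Hgin].
      assert (Hpx : p = x).
      { destruct (le_lt_dec (dd adj e p) n') as [Hle|Hlt].
        - exfalso. apply HB. exists R. split; auto. apply Hgin; lia.
        - specialize (Hpmin x HR). rewrite <- Hgp. rewrite <- Hlast. f_equal. lia. }
      subst p.
      destruct (IH n' ltac:(lia) y Hy) as [k [idx [xs [es [Hxk [He0 [Hproj Hgeo]]]]]]].
      exists (S k), (fun j => if j <=? k then idx j else R), (fun j => if j <=? k then xs j else x),
        (fun j => if j <=? k then es j else x).
      rewrite !leb_Sk. split; [auto|split; [simpl; auto|split]].
      * intros j Hj. destruct (j <=? k) eqn:Ejk.
        -- apply Nat.leb_le in Ejk. apply Hproj; auto.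
        -- split; auto. apply (proj_prop adj Vs Es e Hs Hc Ht R x HR Hpmin).
      * intros g Hg.
        pose proof (geo_len adj e x g Hc Hg) as Hlg. rewrite Hx in Hlg.
        assert (Hyy : nth n' g e = y) by (apply (bridge adj Vs Es e Hs Hc Ht x n' gs g); auto).
        pose proof (geo_prefix adj e x g n' Hc Hg ltac:(lia)) as [Hg' _].
        rewrite Hyy in Hg'.
        destruct (Hgeo _ Hg') as [a [b [Ha0 [Hbk [Hab [Hgap Hseg]]]]]].
        assert (Hlg' : length (firstn (S n') g) = S n') by (rewrite length_firstn; lia).
        rewrite Hlg' in Hbk. replace (S n' - 1) with n' in Hbk by lia.
        pose proof (mono_b a b k Hab (fun j Hj => proj1 (Hgap j Hj))) as Hmono.
        exists (fun j => if j <=? k then a j else S n'), (fun j => if j <=? k then b j else S n').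
        rewrite !leb_Sk. split; [simpl; auto|split; [lia|split; [|split]]].
        -- intros j Hj. destruct (j <=? k) eqn:Ejk; [apply Nat.leb_le in Ejk; auto|lia].
        -- intros j Hj. destruct (Nat.eq_dec j k) as [->|Hjk].
           ++ rewrite Nat.leb_refl, leb_Sk. lia.
           ++ replace (j <=? k) with true by (symmetry; apply Nat.leb_le; lia).
              replace (S j <=? k) with true by (symmetry; apply Nat.leb_le; lia). apply Hgap. lia.
        -- intros j Hj. destruct (j <=? k) eqn:Ejk.
           ++ apply Nat.leb_le in Ejk.
              specialize (Hab j Ejk). specialize (Hmono j Ejk).
              destruct (Hseg j Ejk) as [S1 [S2 [S3 S4]]].
              rewrite nth_firstn in S1, S2.
              replace (a j <? S n') with true in S1 by (symmetry; apply Nat.ltb_lt; lia).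
              replace (b j <? S n') with true in S2 by (symmetry; apply Nat.ltb_lt; lia).
              rewrite subpath_firstn in S3, S4 by lia. auto.
           ++ assert (Hj' : j = S k) by (apply Nat.leb_gt in Ejk; lia). subst j.
              assert (Hxn : nth (S n') g e = x).
              { rewrite <- (geo_last adj e x g Hg). f_equal. lia. }
              rewrite (subpath_single g (S n') e) by lia. rewrite Hxn.
              split; auto. split; auto. split; [constructor; auto|simpl; auto].
Qed.

Theorem lemma4p4 (V I : Type) (adj : V -> V -> Prop)
    (Vs : I -> V -> Prop) (Es : I -> V -> V -> Prop) (e : V) :
  simplicial_graph adj -> connected_graph adj ->
  tree_graded adj Vs Es ->
  forall x : V,
  exists (k : nat) (idx : nat -> I) (xs : nat -> V) (es : nat -> V),
    xs k = x /\ es 0 = e /\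
    (* e_j is the unique vertex of Gamma_{i_j} at minimal distance from e *)
    (forall j, j <= k ->
       Vs (idx j) (es j) /\
       forall v, Vs (idx j) v -> v <> es j ->
         forall n m, dist adj e (es j) n -> dist adj e v m -> n < m) /\
    (forall g, geodesic adj e x g ->
       exists a b : nat -> nat,
         a 0 = 0 /\ b k = length g - 1 /\
         (forall j, j <= k -> a j <= b j) /\
         (* the connecting pieces bar g_j have length at most 1 *)
         (forall j, j < k -> b j <= a (S j) /\ a (S j) <= b j + 1) /\
         (forall j, j <= k ->
            nth (a j) g e = es j /\ nth (b j) g e = xs j /\
            Forall (Vs (idx j)) (subpath g (a j) (b j)) /\
            chain (Es (idx j)) (subpath g (a j) (b j)))).
Proof.
  intros Hs Hc Ht x. exact (main_ind adj Vs Es e Hs Hc Ht (dd adj e x) x eq_refl).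
Qed.
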